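(* Let $G$ be a $k$-minor-critical graph. Then for every separation $(A,B)$ of $G$, the induced subgraph $G[A\cap B]$ is not a split graph; equivalently, $G[A\cap B]$ contains $C_4$, $C_5$ or $2K_2$ as an induced subgraph.
   Context: A graph $G$ is $k$-minor-critical if $\chi(G)=k$ and $\chi(H)<k$ for every minor $H$ of $G$ other than $G$ itself (a minor being obtained by edge deletions, edge contractions and vertex deletions). A separation of $G$ is a pair $(A,B)$ of subsets of $V(G)$ with $A\cup B=V(G)$, $A\setminus B\neq\emptyset$, $B\setminus A\neq\emptyset$, and no edge with one end in $A\setminus B$ and the other in $B\setminus A$. A split graph is a graph whose vertex set can be partitioned into a clique and an independent set (either possibly empty). *)

(* Defs.v *)
From mathcomp Require Import all_boot.
Set Implicit Arguments. Unset Strict Implicit. Unset Printing Implicit Defensive.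

Record sgraph := SGraph {
  vertex :> finType;
  adj : rel vertex;
  adj_sym : symmetric adj;
  adj_irr : irreflexive adj }.

Definition colorable (G : sgraph) (k : nat) : bool :=
  [exists f : {ffun G -> 'I_k}, [forall x, [forall y, adj x y ==> (f x != f y)]]].

Lemma colorable_card (G : sgraph) : colorable G #|G|.
Proof.
apply/existsP; exists [ffun x => enum_rank x].
apply/forallP => x; apply/forallP => y; apply/implyP => hxy.
rewrite !ffunE; apply: contraTneq hxy => /enum_rank_inj ->.
by rewrite adj_irr.
Qed.

Definition chi (G : sgraph) : nat :=
  ex_minn (ex_intro (fun k => colorable G k) _ (colorable_card G)).

Definition isomorphic (H G : sgraph) : Prop :=
  exists f : H -> G, bijective f /\ forall x y, adj (f x) (f y) = adj x y.

Definition connected_in (G : sgraph) (S : {set G}) : Prop :=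
  forall x y, x \in S -> y \in S ->
    connect [rel u v | [&& u \in S, v \in S & adj u v]] x y.

(* H is a minor of G: there is a model of H in G by nonempty, pairwise
   disjoint, connected branch sets, adjacent branch sets for adjacent
   vertices of H (equivalent to obtainability by deletions/contractions). *)
Definition minor (H G : sgraph) : Prop :=
  exists phi : H -> {set G},
    [/\ forall h, phi h != set0,
        forall h, connected_in (phi h),
        forall h h', h != h' -> [disjoint phi h & phi h'] &
        forall h h', adj h h' ->
          exists x y, [/\ x \in phi h, y \in phi h' & adj x y]].

(* k-minor-critical: chi(G) = k and every minor other than G itself
   (i.e. not isomorphic to G) has chromatic number < k. *)
Definition minor_critical (k : nat) (G : sgraph) : Prop :=
  chi G = k /\ forall H : sgraph, minor H G -> ~ isomorphic H G -> chi H < k.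

Definition separation (G : sgraph) (A B : {set G}) : Prop :=
  [/\ A :|: B = setT, A :\: B != set0, B :\: A != set0 &
      forall x y, x \in A :\: B -> y \in B :\: A -> ~~ adj x y].

Definition induced (G : sgraph) (S : {set G}) : sgraph :=
  @SGraph {x : G | x \in S} (fun x y => adj (val x) (val y))
    (fun x y => adj_sym (val x) (val y)) (fun x => adj_irr (val x)).

Definition split_graph (G : sgraph) : Prop :=
  exists C I : {set G},
    [/\ C :|: I = setT, [disjoint C & I],
        (forall x y, x \in C -> y \in C -> x != y -> adj x y) &
        (forall x y, x \in I -> y \in I -> ~~ adj x y)].

(* Main.v *)
Require Import Defs.
From mathcomp Require Import all_boot all_fingroup.
Set Implicit Arguments. Unset Strict Implicit. Unset Printing Implicit Defensive.

Definition restr (G : sgraph) (P : {set G}) : rel G :=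
  [rel u v | [&& u \in P, v \in P & adj u v]].

Lemma restr_sym (G : sgraph) (P : {set G}) : symmetric (restr P).
Proof. by move=> x y; rewrite /restr /= (adj_sym x y) andbCA. Qed.

Lemma connect_ind' (T : finType) (e : rel T) (P : T -> Prop) v :
  P v -> (forall x y, e x y -> P x -> P y) -> forall u, connect e v u -> P u.
Proof.
move=> Pv step u /connectP [p pth ->]; elim: p v Pv pth => [|y p IH] v Pv //=.
by case/andP=> evy pth; apply: IH pth; apply: step evy Pv.
Qed.

Definition gcomp (G : sgraph) (X : {set G}) (v : G) : {set G} :=
  [set u | connect (restr (~: X)) v u].

Lemma comp_sub (G : sgraph) (X : {set G}) v u :
  v \notin X -> u \in gcomp X v -> u \notin X.
Proof.
move=> vX; rewrite inE; apply: (connect_ind' (P := fun u => u \notin X)) => // x y /= /and3P [_].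
by rewrite inE.
Qed.

Lemma comp_self (G : sgraph) (X : {set G}) v : v \in gcomp X v.
Proof. by rewrite inE connect0. Qed.

Lemma comp_closed (G : sgraph) (X : {set G}) v u w :
  v \notin X -> u \in gcomp X v -> w \notin X -> adj u w -> w \in gcomp X v.
Proof.
move=> vX uC wX uw; have uX := comp_sub vX uC.
move: uC; rewrite /gcomp !inE => cu; apply: connect_trans cu _; apply: connect1.
by rewrite /restr /= !inE uX wX.
Qed.

Lemma comp_avoid (G : sgraph) (X Y : {set G}) v :
  (forall u w, u \notin X -> w \notin X -> adj u w -> u \notin Y -> w \notin Y) ->
  v \notin Y -> forall u, u \in gcomp X v -> u \notin Y.
Proof.
move=> h vY u; rewrite inE; apply: (connect_ind' (P := fun u => u \notin Y)) => // x y /= /and3P [].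
rewrite !inE => xX yX; exact: h.
Qed.

Lemma comp_conn (G : sgraph) (X : {set G}) v :
  v \notin X -> connected_in (gcomp X v).
Proof.
move=> vX.
have key : forall u, u \in gcomp X v -> connect (restr (gcomp X v)) v u.
  move=> u; rewrite inE; apply: (connect_ind' (P := fun u => connect (restr (gcomp X v)) v u)); first exact: connect0.
  move=> x y exy cx.
  have xC : x \in gcomp X v.
    rewrite inE; apply: connect_sub cx => a b /= /and3P [aC bC ab].
    by apply: connect1; rewrite /restr /= !inE (comp_sub vX aC) (comp_sub vX bC).
  have yC : y \in gcomp X v.
    move: exy => /and3P [_ yX xy]; rewrite inE in yX; exact: comp_closed xC yX xy.
  apply: connect_trans cx (connect1 _).
  by rewrite /restr /= xC yC; case/and3P: exy.
move=> x y xC yC.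
have := connect_trans (key _ xC) ; rewrite /connected_in.
have sym := sym_connect_sym (restr_sym (gcomp X v)).
move=> _; change (connect (restr (gcomp X v)) x y).
by apply: connect_trans (key _ yC); rewrite sym; apply: key.
Qed.

Definition nbh (G : sgraph) (S D : {set G}) : {set G} :=
  [set s in S | [exists d in D, adj s d]].

Lemma perm_ext_seq (T U : finType) (a b : U -> T) (s : seq U) :
  {in s &, forall x y, (a x == a y) = (b x == b y)} ->
  exists p : {perm T}, {in s, forall x, p (a x) = b x}.
Proof.
elim: s => [|x s IH] h; first by exists 1%g.
have [|p hp] := IH; first by move=> y z ys zs; apply: h; rewrite inE ?ys ?zs orbT.
exists (p * tperm (p (a x)) (b x))%g => y; rewrite inE => /orP [/eqP ->|ys].
  by rewrite permM tpermL.
rewrite permM (hp y ys); case: (a y =P a x) => [eqa|neqa].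
  have /eqP eqb : b y == b x by rewrite -h ?eqa // inE ?ys ?eqxx ?orbT.
  by rewrite eqb -eqa hp // eqb tpermR.
have nb : b y != b x.
  by rewrite -h ?inE ?ys ?eqxx ?orbT //; apply/eqP.
rewrite tpermD //; last by rewrite eq_sym.
by rewrite -(hp y ys) (inj_eq perm_inj) eq_sym; apply/eqP.
Qed.

Lemma perm_ext (T U : finType) (a b : U -> T) (S : {set U}) :
  {in S &, forall x y, (a x == a y) = (b x == b y)} ->
  exists p : {perm T}, {in S, forall x, p (a x) = b x}.
Proof.
move=> h; have [|p hp] := @perm_ext_seq T U a b (enum S).
  by move=> x y; rewrite !mem_enum; apply: h.
by exists p => x xS; apply: hp; rewrite mem_enum.
Qed.

Lemma colorable_mono (G : sgraph) m n : m <= n -> colorable G m -> colorable G n.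
Proof.
move=> mn /existsP [f /forallP hf]; apply/existsP.
exists [ffun x => widen_ord mn (f x)]; apply/forallP => x; apply/forallP => y.
apply/implyP => xy; rewrite !ffunE; have := forallP (hf x) y.
by move/implyP/(_ xy); apply: contra => /eqP [] /val_inj ->.
Qed.

Lemma chi_colorable (G : sgraph) : colorable G (chi G).
Proof. by rewrite /chi; case: ex_minnP. Qed.

Lemma chi_min (G : sgraph) n : colorable G n -> chi G <= n.
Proof. by rewrite /chi; case: ex_minnP => m _ h /h. Qed.

Definition cadj (G : sgraph) (W : {set G}) (phi : G -> {set G}) :
  rel {x : G | x \in W} :=
  fun u v => (u != v) && [exists x in phi (val u), exists y in phi (val v), adj x y].
Arguments cadj {G} W phi.

Lemma cadj_sym (G : sgraph) (W : {set G}) (phi : G -> {set G}) :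
  symmetric (cadj W phi).
Proof.
move=> u v; rewrite /cadj eq_sym; congr (_ && _).
apply/existsP/existsP => -[x /andP [xu /existsP [y /andP [yv xy]]]];
  exists y; rewrite yv /=; apply/existsP; exists x; by rewrite xu adj_sym.
Qed.

Lemma cadj_irr (G : sgraph) (W : {set G}) (phi : G -> {set G}) :
  irreflexive (cadj W phi).
Proof. by move=> u; rewrite /cadj eqxx. Qed.

Definition cgraph (G : sgraph) (W : {set G}) (phi : G -> {set G}) : sgraph :=
  @SGraph {x : G | x \in W} (cadj W phi) (@cadj_sym G W phi) (@cadj_irr G W phi).

Lemma cgraph_minor (G : sgraph) (W : {set G}) (phi : G -> {set G}) :
  (forall x, x \in W -> phi x != set0) ->
  (forall x, x \in W -> connected_in (phi x)) ->
  (forall x y, x \in W -> y \in W -> x != y -> [disjoint phi x & phi y]) ->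
  minor (cgraph W phi) G.
Proof.
move=> h1 h2 h3; exists (fun h => phi (val h)); split.
- by move=> h; apply: h1; apply: valP.
- by move=> h; apply: h2; apply: valP.
- by move=> h h' hh; apply: h3; try apply: valP; rewrite (inj_eq val_inj).
move=> h h' /andP [_ /existsP [x /andP [xh /existsP [y /andP [yh xy]]]]].
by exists x, y.
Qed.

Lemma cgraph_noniso (G : sgraph) (W : {set G}) (phi : G -> {set G}) :
  W != setT -> ~ isomorphic (cgraph W phi) G.
Proof.
move=> WT [f [bf _]]; have := bij_eq_card bf; rewrite card_sig.
have : #|W| < #|G| by rewrite -cardsT; apply: proper_card; rewrite properT.
have -> : #|[pred x in W]| = #|W| by apply: eq_card => x; rewrite inE.
by move=> lt e; rewrite e ltnn in lt.
Qed.

Lemma side (k : nat) (G : sgraph) (D Cs Is : {set G}) (v0 : G) :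
  (forall H : sgraph, minor H G -> ~ isomorphic H G -> chi H < k) ->
  v0 \notin D -> D != set0 -> connected_in D ->
  [disjoint D & Cs] -> [disjoint D & Is] -> [disjoint Cs & Is] ->
  (forall x y, x \in Cs -> y \in Cs -> x != y -> adj x y) ->
  (forall x y, x \in Is -> y \in Is -> ~~ adj x y) ->
  (forall s, s \in Cs :|: Is -> exists2 d, d \in D & adj s d) ->
  exists g : G -> 'I_k.-1,
    (forall u v, u \notin D -> v \notin D -> adj u v -> g u != g v) /\
    (forall s s', s \in Cs :|: Is -> s' \in Cs :|: Is ->
       (g s == g s') = (s == s') || (s \in Is) && (s' \in Is)).
Proof.
move=> crit v0D Dn0 Dconn dDC dDI dCI Ccl Iind full.
set io := [pick i in Is].
set W := [set v | (v \notin D) && ((v \notin Is) || (Some v == io))].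
pose phi := fun v : G => if v \in Is then Is :|: D else [set v].
pose rep := fun v : G => if v \in Is then odflt v io else v.
have ioP : forall v, v \in Is -> exists2 i0, io = Some i0 & i0 \in Is.
  move=> v vI; rewrite /io; case: pickP => [i0 i0I|/(_ v)]; last by rewrite vI.
  by exists i0.
have ID : forall x, x \in Is -> x \notin D by move=> x xI; rewrite (disjointFl dDI).
have CD : forall x, x \in Cs -> x \notin D by move=> x xI; rewrite (disjointFl dDC).
have CI : forall x, x \in Cs -> x \notin Is by move=> x xI; rewrite (disjointFr dCI).
have repI : forall v, v \in Is -> exists2 i0, io = Some i0 & rep v = i0 /\ i0 \in Is.
  by move=> v vI; have [i0 e i0I] := ioP v vI; exists i0; rewrite // /rep vI e.
have repN : forall v, v \notin Is -> rep v = v by move=> v vI; rewrite /rep (negbTE vI).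
have repW : forall v, v \notin D -> rep v \in W.
  move=> v vD; rewrite inE; case: (boolP (v \in Is)) => vI.
    have [i0 e [-> i0I]] := repI v vI.
    by rewrite ID //= e eqxx orbT.
  by rewrite repN // vD vI.
have inphi : forall v, v \notin D -> v \in phi (rep v).
  move=> v vD; case: (boolP (v \in Is)) => vI.
    by have [i0 e [-> i0I]] := repI v vI; rewrite /phi i0I !inE vI.
  by rewrite repN // /phi (negbTE vI) inE.
have WI : forall x, x \in W -> x \in Is -> io = Some x.
  by move=> x; rewrite inE => /andP [_ /orP [/negP //|/eqP <-]].
have WD : forall x, x \in W -> x \notin D by move=> x; rewrite inE => /andP [].
pose H := cgraph W phi.
have Hmin : minor H G.
  apply: cgraph_minor.
  - move=> x _; rewrite /phi; case: ifP => _; apply/set0Pn; last by exists x; rewrite inE.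
    by have /set0Pn [d dD] := Dn0; exists d; rewrite inE dD orbT.
  - move=> x xW; rewrite /phi; case: ifP => _; last first.
      by move=> a b; rewrite !inE => /eqP -> /eqP ->; apply: connect0.
    move=> x0 y0 xU yU; change (connect (restr (Is :|: D)) x0 y0).
    have toD : forall z, z \in Is :|: D -> exists2 d, d \in D & connect (restr (Is :|: D)) z d.
      move=> z; rewrite inE => /orP [zI|zD]; last by exists z; rewrite ?connect0.
      have zU : z \in Cs :|: Is by rewrite inE zI orbT.
      have [d dD zd] := full z zU.
      by exists d => //; apply: connect1; rewrite /restr /= !inE zI dD zd orbT.
    have DD : forall d d', d \in D -> d' \in D -> connect (restr (Is :|: D)) d d'.
      move=> d d' dD d'D; apply: connect_sub (Dconn d d' dD d'D) => a b /= /and3P [aD bD ab].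
      by apply: connect1; rewrite /restr /= !inE aD bD ab !orbT.
    have [d dD xd] := toD x0 xU; have [d' d'D yd'] := toD y0 yU.
    apply: connect_trans xd _; apply: connect_trans (DD _ _ dD d'D) _.
    by rewrite (sym_connect_sym (@restr_sym G _)).
  - move=> x y xW yW xy; rewrite /phi.
    case: (boolP (x \in Is)) => xI; case: (boolP (y \in Is)) => yI.
    + have := WI x xW xI; rewrite (WI y yW yI) => -[] e; by rewrite e eqxx in xy.
    + by rewrite disjoint_sym disjoints1 !inE negb_or yI (WD y yW).
    + by rewrite disjoints1 !inE negb_or xI (WD x xW).
    + by rewrite disjoints1 inE.
have Hni : ~ isomorphic H G.
  apply: cgraph_noniso; apply/negP => /eqP WT.
  have /set0Pn [d dD] := Dn0; have := WD d; rewrite WT inE dD => /(_ isT).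
  by [].
have Hk := crit _ Hmin Hni.
have /existsP [f /forallP fP] : colorable H k.-1.
  by apply: colorable_mono (chi_colorable H); by rewrite -ltnS; case: (k) Hk => // n; rewrite ltnS.
have h0 : H := Sub (rep v0) (repW v0 v0D).
pose g := fun v => f (insubd h0 (rep v)).
have gneq : forall u v, u \notin D -> v \notin D -> rep u != rep v ->
    [exists x in phi (rep u), exists y in phi (rep v), adj x y] -> g u != g v.
  move=> u v uD vD ne ex.
  have := forallP (fP (insubd h0 (rep u))) (insubd h0 (rep v)); move/implyP; apply.
  rewrite /= /cadj -(inj_eq val_inj) !insubdK ?repW // ne /=.
  exact: ex.
have exE : forall u v, u \notin D -> v \notin D -> adj u v ->
    [exists x in phi (rep u), exists y in phi (rep v), adj x y].
  move=> u v uD vD uv; apply/existsP; exists u; rewrite inphi //=.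
  by apply/existsP; exists v; rewrite inphi.
exists g; split.
  move=> u v uD vD uv; apply: gneq => //; last exact: exE.
  case: (boolP (u \in Is)) => uI; case: (boolP (v \in Is)) => vI.
  - by have := Iind u v uI vI; rewrite uv.
  - have [i0 _ [-> i0I]] := repI u uI; rewrite (repN v vI).
    by apply: contraNneq vI => <-.
  - have [i0 _ [-> i0I]] := repI v vI; rewrite (repN u uI).
    by apply: contraNneq uI => ->.
  - rewrite !repN //; apply: contraTneq uv => ->; by rewrite adj_irr.
have cross : forall c i, c \in Cs -> i \in Is -> g c != g i.
  move=> c i cC iI; have [i0 _ [e i0I]] := repI i iI.
  apply: gneq; [exact: CD | exact: ID | |].
    by rewrite e repN ?CI //; apply: contraTneq i0I => <-; rewrite CI.
  have cU : c \in Cs :|: Is by rewrite inE cC.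
  have [d dD cd] := full c cU.
  apply/existsP; exists c; rewrite repN ?CI // /phi (negbTE (CI c cC)) inE eqxx /=.
  by apply/existsP; exists d; rewrite e i0I !inE dD orbT.
have gI : forall i i', i \in Is -> i' \in Is -> g i = g i'.
  move=> i i' iI i'I; have [i0 e [e1 _]] := repI i iI; have [i1 e' [e2 _]] := repI i' i'I.
  by rewrite /g e1 e2; move: e; rewrite e' => -[] ->.
move=> s s'; rewrite !inE => /orP [sC|sI] /orP [s'C|s'I].
- case: (s =P s') => [->|ne]; first by rewrite !eqxx.
  rewrite (negbTE (CI s sC)) /=; apply/negbTE; apply: gneq; rewrite ?CD //.
    by rewrite !repN ?CI //; apply/eqP.
  by apply: exE; rewrite ?CD //; apply: Ccl => //; apply/eqP.
- have ne : s != s' by apply: contraTneq s'I => <-; rewrite CI.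
  by rewrite (negbTE (cross _ _ sC s'I)) (negbTE (CI s sC)) (negbTE ne).
- have ne : s != s' by apply: contraTneq sI => ->; rewrite CI.
  by rewrite eq_sym (negbTE (cross _ _ s'C sI)) (negbTE (CI s' s'C)) (negbTE ne) andbF.
- by rewrite (gI s s') // eqxx sI s'I orbT.
Qed.

Theorem mainTheorem12 (k : nat) (G : sgraph) (A B : {set G}) :
  minor_critical k G -> separation A B -> ~ split_graph (induced (A :&: B)).
Proof.
move=> [chiG crit] [AB /set0Pn [a aAB] /set0Pn [b bBA] nadj] [C [I [CI dCI Ccl Iind]]].
set S := A :&: B.
pose Cs0 := [set val x | x in C]; pose Is0 := [set val x | x in I].
have Ssplit : forall s, s \in S -> (s \in Cs0) || (s \in Is0).
  move=> s sS; have : (Sub s sS : induced S) \in C :|: I by rewrite CI inE.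
  by rewrite inE => /orP [h|h]; [rewrite (imset_f val h) | rewrite (imset_f val h) orbT].
have CsS : forall s, s \in Cs0 -> s \in S by move=> s /imsetP [x _ ->]; exact: valP.
have CsIs : forall s, s \in Cs0 -> s \notin Is0.
  move=> s /imsetP [x xC ->]; apply/imsetP => -[y yI /val_inj e].
  by rewrite -e (disjointFr dCI xC) in yI.
have Cscl : forall x y, x \in Cs0 -> y \in Cs0 -> x != y -> adj x y.
  move=> x y /imsetP [x' x'C ->] /imsetP [y' y'C ->] ne.
  by apply: (Ccl x' y') => //; apply: contraNneq ne => ->.
have Isind : forall x y, x \in Is0 -> y \in Is0 -> ~~ adj x y.
  by move=> x y /imsetP [x' x'C ->] /imsetP [y' y'C ->]; apply: (Iind x' y').
have nadj' : forall u w, u \notin S -> w \notin S -> adj u w -> u \in B :\: A -> w \in B :\: A.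
  move=> u w _ wS uw uBA; move: wS; rewrite /S !inE.
  have : w \in A :|: B by rewrite AB inE.
  rewrite inE; case wA: (w \in A); case wB: (w \in B) => //= _ _.
  have := nadj w u; rewrite !inE wA wB /= (adj_sym w u) uw; move: uBA; rewrite !inE => -> /(_ isT isT).
  by [].
have aS : a \notin S by move: aAB; rewrite /S !inE => /andP [/negbTE -> _]; rewrite andbF.
have bS : b \notin S by move: bBA; rewrite /S !inE => /andP [/negbTE -> _].
set D := gcomp S b.
set S1 := nbh S D.
set D' := gcomp S1 a.
set S2 := nbh S1 D'.
set D'' := gcomp S2 b.
have S1S : forall x, x \in S1 -> x \in S by move=> x; rewrite inE => /andP [].
have S2S1 : forall x, x \in S2 -> x \in S1 by move=> x; rewrite inE => /andP [].
have DS : forall x, x \in D -> x \notin S by move=> x; apply: comp_sub.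
have aD : a \notin D.
  apply/negP => aD.
  have h : forall u w, u \notin S -> w \notin S -> adj u w -> u \notin ~: (B :\: A) -> w \notin ~: (B :\: A).
    move=> u w uS wS uw; rewrite !in_setC !negbK; exact: nadj' uw.
  have bY : b \notin ~: (B :\: A) by rewrite inE negbK.
  have := @comp_avoid G S (~: (B :\: A)) b h bY a aD.
  by rewrite inE negbK !inE; move: aAB; rewrite !inE => /andP [_ ->].
have aS1 : a \notin S1 by apply: contra aS; apply: S1S.
have D'D : forall x, x \in D' -> x \notin D.
  apply: comp_avoid aD => u w uS1 wS1 uw uD; apply/negP => wD.
  case: (boolP (u \in S)) => uS.
    by move: uS1; rewrite inE uS /=; case/existsP; exists w; rewrite wD uw.
  by move: uD; rewrite (comp_closed bS wD uS) // adj_sym.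
have D'S1 : forall x, x \in D' -> x \notin S1 by move=> x; apply: comp_sub.
have bD' : b \notin D' by apply/negP => /D'D; rewrite comp_self.
have bS2 : b \notin S2 by apply: contra bS => /S2S1 /S1S.
have D''D' : forall x, x \in D'' -> x \notin D'.
  apply: comp_avoid bD' => u w uS2 wS2 uw uD'; apply/negP => wD'.
  case: (boolP (u \in S1)) => uS1.
    by move: uS2; rewrite inE uS1 /=; case/existsP; exists w; rewrite wD' uw.
  by move: uD'; rewrite (comp_closed aS1 wD' uS1) // adj_sym.
have DD'' : forall x, x \in D -> x \in D''.
  move=> x; rewrite !inE; apply: connect_sub => u w /= /and3P [uS wS uw].
  apply: connect1; rewrite /restr /= !in_setC uw andbT.
  rewrite !in_setC in uS wS; apply/andP; split.
    by apply: contra uS => /S2S1 /S1S.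
  by apply: contra wS => /S2S1 /S1S.
have D'cl : forall u w, u \in D' -> w \notin D' -> adj u w -> w \in S2.
  move=> u w uD' wD' uw; case: (boolP (w \in S1)) => wS1.
    by rewrite inE wS1 /=; apply/existsP; exists u; rewrite uD' adj_sym.
  by move: wD'; rewrite (comp_closed aS1 uD' wS1 uw).
have D''S2 : forall x, x \in D'' -> x \notin S2 by move=> x; apply: comp_sub.
pose Cs := Cs0 :&: S2; pose Is := Is0 :&: S2.
have S2U : forall s, s \in S2 -> s \in Cs :|: Is.
  move=> s sS2; have := Ssplit s (S1S _ (S2S1 _ sS2)).
  by by rewrite !in_setU !in_setI sS2 !andbT.
have UC : forall s, s \in Cs :|: Is -> s \in S2.
  by move=> s; rewrite !inE => /orP [] /andP [].
have dCsIs : [disjoint Cs & Is].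
  apply/pred0P => x /=; rewrite !inE; apply/negP => /andP [/andP [xC _] /andP [xI _]].
  by move: (CsIs x xC); rewrite xI.
have Cscl' : forall x y, x \in Cs -> y \in Cs -> x != y -> adj x y.
  move=> x y; rewrite !inE => /andP [xC _] /andP [yC _]; exact: Cscl.
have Isind' : forall x y, x \in Is -> y \in Is -> ~~ adj x y.
  move=> x y; rewrite !inE => /andP [xC _] /andP [yC _]; exact: Isind.
have disjD : forall D0 : {set G}, (forall x, x \in S2 -> x \notin D0) ->
    [disjoint D0 & Cs] /\ [disjoint D0 & Is].
  move=> D0 h; split; apply/pred0P => x /=; rewrite !in_setI;
    apply/negP => /andP [xD /andP [_ xS]]; by rewrite (negbTE (h x xS)) in xD.
have [dD'C dD'I] : [disjoint D' & Cs] /\ [disjoint D' & Is].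
  apply: disjD => x /S2S1 xS1; apply/negP => /D'S1; by rewrite xS1.
have [dD''C dD''I] : [disjoint D'' & Cs] /\ [disjoint D'' & Is].
  apply: disjD => x xS2; apply/negP => /D''S2; by rewrite xS2.
have fullD' : forall s, s \in Cs :|: Is -> exists2 d, d \in D' & adj s d.
  move=> s /UC; rewrite inE => /andP [_ /existsP [d /andP [dD sd]]]; by exists d.
have fullD'' : forall s, s \in Cs :|: Is -> exists2 d, d \in D'' & adj s d.
  move=> s /UC /S2S1; rewrite inE => /andP [_ /existsP [d /andP [dD sd]]].
  by exists d => //; apply: DD''.
have D'n0 : D' != set0 by apply/set0Pn; exists a; apply: comp_self.
have D''n0 : D'' != set0 by apply/set0Pn; exists b; apply: comp_self.
have [g1 [g1P g1S]] := side crit bD' D'n0 (comp_conn aS1) dD'C dD'I dCsIs Cscl' Isind' fullD'.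
have aD'' : a \notin D''.
  by apply/negP => /D''D'; rewrite comp_self.
have [g2 [g2P g2S]] := side crit aD'' D''n0 (comp_conn bS2) dD''C dD''I dCsIs Cscl' Isind' fullD''.
have [p pP] : exists p : {perm 'I_k.-1}, {in S2, forall x, p (g2 x) = g1 x}.
  apply: perm_ext => x y xS yS; rewrite g1S ?g2S //; exact: S2U.
pose g := fun v => if v \in D' then p (g2 v) else g1 v.
have gP : forall u v, adj u v -> g u != g v.
  have mixed : forall u v, u \in D' -> v \notin D' -> adj u v -> g u != g v.
    move=> u v uD' vD' uv; have vS2 := D'cl u v uD' vD' uv.
    rewrite /g uD' (negbTE vD') -(pP v vS2) (inj_eq perm_inj).
    apply: g2P uv.
      by apply/negP => /D''D'; rewrite uD'.
    by apply/negP => /D''S2; rewrite vS2.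
  move=> u v uv; case: (boolP (u \in D')) => uD'; case: (boolP (v \in D')) => vD'.
  - rewrite /g uD' vD' (inj_eq perm_inj); apply: g2P uv.
      by apply/negP => /D''D'; rewrite uD'.
    by apply/negP => /D''D'; rewrite vD'.
  - exact: mixed.
  - by rewrite eq_sym; apply: mixed; rewrite // adj_sym.
  - by rewrite /g (negbTE uD') (negbTE vD'); apply: g1P.
have colG : colorable G k.-1.
  apply/existsP; exists [ffun v => g v]; apply/forallP => x; apply/forallP => y.
  by apply/implyP => xy; rewrite !ffunE; apply: gP.
have := chi_min colG; rewrite chiG.
case: (k) chiG => [|n] chiG' /=; last by rewrite ltnn.
have := chi_colorable G; rewrite chiG' => /existsP [f _].
by case: (f a).
Qed.
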